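(* A family of structures $\mathfrak{K}=\{\mathcal{A}_i:i\in\mathbb{N}\}$ is $E_{range}$-learnable if and only if $\mathfrak{K}$ is a $\Sigma^{\mathrm{inf}}_1$-partial order, i.e., for all $i\neq j$, $\mathrm{Th}_{\Sigma^{\mathrm{inf}}_1}(\mathcal{A}_i)\neq\mathrm{Th}_{\Sigma^{\mathrm{inf}}_1}(\mathcal{A}_j)$.
   Context: All structures are countable, have domain $\mathbb{N}$, are in a finite relational signature, and are identified with their atomic diagrams (elements of $2^{\mathbb{N}}$). A family of structures is a countable set of pairwise nonisomorphic such structures. $\mathrm{LD}(\mathfrak{K})\subseteq 2^{\mathbb{N}}$ is the set of structures with domain $\mathbb{N}$ isomorphic to a member of $\mathfrak{K}$ (subspace topology). For an equivalence relation $E$ on a space $X$, $\mathfrak{K}$ is $E$-learnable if there is a continuous $\Gamma:\mathrm{LD}(\mathfrak{K})\to X$ with $\mathcal{S}\cong\mathcal{S}'\iff\Gamma(\mathcal{S})\,E\,\Gamma(\mathcal{S}')$ for all $\mathcal{S},\mathcal{S}'\in\mathrm{LD}(\mathfrak{K})$. $E_{range}$ is the equivalence relation on Baire space $\mathbb{N}^{\mathbb{N}}$ given by $p\,E_{range}\,q\iff\{p(m):m\in\mathbb{N}\}=\{q(m):m\in\mathbb{N}\}$. $\mathrm{Th}_{\Sigma^{\mathrm{inf}}_1}(\mathcal{A})$ is the set of $\Sigma^{\mathrm{inf}}_1$ sentences of $\mathcal{L}_{\omega_1\omega}$ true in $\mathcal{A}$, where a $\Sigma^{\mathrm{inf}}_1$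 formula is a countable disjunction $\bigvee_i\exists\bar y_i\,\psi_i(\bar x,\bar y_i)$ with each $\psi_i$ finitary quantifier-free. *)

(* Defs.v *)
From mathcomp Require Import all_boot.
Set Implicit Arguments. Unset Strict Implicit. Unset Printing Implicit Defensive.

(* A finite relational signature: the list of arities of its relation symbols. *)
Definition signature := seq nat.

(* A structure with domain nat: for each relation symbol i, its
   characteristic function on (arity i)-tuples of naturals.  This is the
   atomic diagram (equality on nat is fixed). *)
Record structure (L : signature) := Structure {
  rel : forall i : 'I_(size L), (nth 0 L i).-tuple nat -> bool }.
Arguments rel {L} s i t.

Definition isomorphic (L : signature) (A B : structure L) : Prop :=
  exists f : nat -> nat, bijective f /\
    forall (i : 'I_(size L)) (t : (nth 0 L i).-tuple nat),
      rel A i t = rel B i (map_tuple f t).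

Definition LD (L : signature) (K : nat -> structure L) (S : structure L) : Prop :=
  exists i, isomorphic S (K i).

(* The sets {S' | agree m S S'} form a neighbourhood basis of S in the
   product topology of 2^N (the Cantor-space topology on atomic diagrams). *)
Definition agree (L : signature) (m : nat) (S S' : structure L) : Prop :=
  forall (i : 'I_(size L)) (t : (nth 0 L i).-tuple nat),
    all (fun x => x < m) t -> rel S i t = rel S' i t.

Definition continuous_on_LD (L : signature) (K : nat -> structure L)
  (G : structure L -> nat -> nat) : Prop :=
  forall S, LD K S -> forall n, exists m, forall S', LD K S' -> agree m S S' ->
    forall k, k < n -> G S' k = G S k.

Definition E_range (p q : nat -> nat) : Prop :=
  forall x, (exists m, p m = x) <-> (exists m, q m = x).

Definition E_range_learnable (L : signature) (K : nat -> structure L) : Prop :=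
  exists G : structure L -> nat -> nat,
    continuous_on_LD K G /\
    forall S S', LD K S -> LD K S' -> (isomorphic S S' <-> E_range (G S) (G S')).

Inductive qf :=
  | QTrue
  | QEq of nat & nat
  | QRel of nat & seq nat
  | QNot of qf
  | QAnd of qf & qf
  | QOr of qf & qf.

Fixpoint qf_eval (L : signature) (A : structure L) (a : nat -> nat) (phi : qf) : bool :=
  match phi with
  | QTrue => true
  | QEq x y => a x == a y
  | QRel i vs =>
      match (insub i : option 'I_(size L)) with
      | Some j =>
          match (insub (map a vs) : option ((nth 0 L j).-tuple nat)) with
          | Some t => rel A j t
          | None => false (* ill-formed atomic formula (wrong arity) *)
          end
      | None => false (* ill-formed atomic formula (no such symbol) *)
      end
  | QNot p => ~~ qf_eval A a p
  | QAnd p q => qf_eval A a p && qf_eval A a q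
  | QOr p q => qf_eval A a p || qf_eval A a q
  end.

(* A Sigma^inf_1 sentence: a countable disjunction  \/_k  exists ybar_k psi_k(ybar_k),
   represented by the sequence k |-> psi_k; all (finitely many) variables
   occurring in psi_k are existentially quantified. *)
Definition sigma1_sentence := nat -> qf.

Definition sat_sigma1 (L : signature) (A : structure L) (phi : sigma1_sentence) : Prop :=
  exists k, exists a : nat -> nat, qf_eval A a (phi k).

Definition Th_sigma1 (L : signature) (A : structure L) : sigma1_sentence -> Prop :=
  fun phi => sat_sigma1 A phi.

Definition sigma1_partial_order (L : signature) (K : nat -> structure L) : Prop :=
  forall i j, i <> j -> Th_sigma1 (K i) <> Th_sigma1 (K j).

(* Main.v *)
From HB Require Import structures.
Require Import Defs.
From mathcomp Require Import all_boot.
From Stdlib Require Import FunctionalExtensionality PropExtensionality.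
Import Defs.
Set Implicit Arguments. Unset Strict Implicit. Unset Printing Implicit Defensive.

Fixpoint qf_enc (p : qf) : GenTree.tree nat :=
  match p with
  | QTrue => GenTree.Node 0 [::]
  | QEq x y => GenTree.Node 1 [:: GenTree.Leaf x; GenTree.Leaf y]
  | QRel i vs => GenTree.Node 2 (GenTree.Leaf i :: map (@GenTree.Leaf nat) vs)
  | QNot p => GenTree.Node 3 [:: qf_enc p]
  | QAnd p q => GenTree.Node 4 [:: qf_enc p; qf_enc q]
  | QOr p q => GenTree.Node 5 [:: qf_enc p; qf_enc q]
  end.

Definition getleaf (t : GenTree.tree nat) : option nat :=
  if t is GenTree.Leaf x then Some x else None.

Fixpoint qf_dec (t : GenTree.tree nat) : option qf :=
  match t with
  | GenTree.Node 0 [::] => Some QTrue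
  | GenTree.Node 1 [:: GenTree.Leaf x; GenTree.Leaf y] => Some (QEq x y)
  | GenTree.Node 2 (GenTree.Leaf i :: ls) => Some (QRel i (pmap getleaf ls))
  | GenTree.Node 3 [:: t] => omap QNot (qf_dec t)
  | GenTree.Node 4 [:: t; u] =>
      match qf_dec t, qf_dec u with Some p, Some q => Some (QAnd p q) | _, _ => None end
  | GenTree.Node 5 [:: t; u] =>
      match qf_dec t, qf_dec u with Some p, Some q => Some (QOr p q) | _, _ => None end
  | _ => None
  end.

Lemma qf_encK : pcancel qf_enc qf_dec.
Proof.
elim=> //= [i vs|p -> |p -> q -> |p -> q ->] //.
by elim: vs => //= v vs [->].
Qed.

HB.instance Definition _ := Countable.copy qf (pcan_type qf_encK).

Section Sec.
Variable L : signature.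

Lemma qrelE (S : structure L) a (r : 'I_(size L)) (t : (nth 0 L r).-tuple nat) :
  qf_eval S a (QRel r t) = rel S r (map_tuple a t).
Proof. by rewrite /= valK (valK (map_tuple a t)). Qed.

Lemma qf_eval_agree m (S S' : structure L) a p :
  (forall v, a v < m) -> agree m S S' -> qf_eval S a p = qf_eval S' a p.
Proof.
move=> Ha HA; elim: p => //= [i vs|p ->|p -> q ->|p -> q ->] //.
case: insub => [j|] //.
case: insubP => [t _ Ht|] //.
apply: HA; rewrite Ht; apply/allP => x /mapP [v _ ->]; exact: Ha.
Qed.

Lemma qf_eval_iso (A B : structure L) f a p :
  injective f ->
  (forall (i : 'I_(size L)) (t : (nth 0 L i).-tuple nat), rel A i t = rel B i (map_tuple f t)) ->
  qf_eval A a p = qf_eval B (f \o a) p.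
Proof.
move=> fi Hr; elim: p => //= [x y|i vs|p ->|p -> q ->|p -> q ->] //.
  by rewrite /= (inj_eq fi).
case: insub => [j|] //.
case: insubP => [t _ Ht|Hn].
  have -> : insub (map (f \o a) vs) = Some (map_tuple f t).
    by rewrite map_comp -Ht (valK (map_tuple f t)).
  exact: Hr.
by rewrite insubN // size_map; rewrite size_map in Hn.
Qed.

Fixpoint vb (p : qf) : nat :=
  match p with
  | QTrue => 0
  | QEq x y => (maxn x y).+1
  | QRel _ vs => (foldr maxn 0 vs).+1
  | QNot p => vb p
  | QAnd p q | QOr p q => maxn (vb p) (vb q)
  end.

Lemma le_foldr_max l x : x \in l -> x <= foldr maxn 0 l.
Proof.
elim: l => //= y l IH; rewrite in_cons => /orP [/eqP ->|/IH]; rewrite leq_max ?leqnn //.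
by move=> ->; rewrite orbT.
Qed.

Lemma qf_eval_ext (S : structure L) a a' p :
  (forall v, v < vb p -> a v = a' v) -> qf_eval S a p = qf_eval S a' p.
Proof.
elim: p a a' => //= [x y|i vs|p IH|p IHp q IHq|p IHp q IHq] a a' H.
- by rewrite !H // ltnS leq_max leqnn ?orbT.
- have -> // : map a vs = map a' vs.
  by apply/eq_in_map => v Hv; apply: H; rewrite ltnS; exact: le_foldr_max.
- by rewrite (IH a a').
- by rewrite (IHp a a') ?(IHq a a') // => v Hv; apply: H; rewrite leq_max Hv ?orbT.
- by rewrite (IHp a a') ?(IHq a a') // => v Hv; apply: H; rewrite leq_max Hv ?orbT.
Qed.

End Sec.
Section Sec2.
Variable L : signature.
Implicit Types A B S : structure L.

Lemma iso_refl A : isomorphic A A.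
Proof.
exists id; split; first exact: (Bijective (g:=id)).
by move=> i t; congr (rel A i); apply: val_inj; rewrite /= map_id.
Qed.

Lemma iso_sym A B : isomorphic A B -> isomorphic B A.
Proof.
move=> [f [[g fg gf] Hr]]; exists g; split; first exact: (Bijective gf fg).
move=> i t; rewrite Hr; congr (rel B i); apply: val_inj => /=.
by rewrite -map_comp (eq_map gf) map_id.
Qed.

Lemma iso_trans A B C : isomorphic A B -> isomorphic B C -> isomorphic A C.
Proof.
move=> [f [bf Hf]] [g [bg Hg]]; exists (g \o f); split; first exact: bij_comp.
move=> i t; rewrite Hf Hg; congr (rel C i); apply: val_inj => /=.
by rewrite map_comp.
Qed.

Lemma iso_sat A B p : isomorphic A B ->
  (exists a, qf_eval A a p) -> exists a, qf_eval B a p.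
Proof.
move=> [f [bf Hf]] [a Ha]; exists (f \o a).
by rewrite -(qf_eval_iso _ _ (bij_inj bf) Hf).
Qed.

Definition Gam S (k : nat) : nat :=
  match (unpickle k : option (qf * seq nat)) with
  | Some pl => if qf_eval S (nth 0 pl.2) pl.1 then (pickle pl.1).+1 else 0
  | None => 0
  end.

Lemma Gam_range S x : (exists k, Gam S k = x) <->
  (x = 0 \/ exists p, x = (pickle p).+1 /\ exists a, qf_eval S a p).
Proof.
split.
  move=> [k <-]; rewrite /Gam; case: unpickle => [[p l]|]; last by left.
  case E: qf_eval; last by left.
  by right; exists p; split => //; exists (nth 0 l).
case=> [->|[p [-> [a Ha]]]].
  by exists (pickle (QNot QTrue, [::] : seq nat)); rewrite /Gam pickleK.
exists (pickle (p, mkseq a (vb p))); rewrite /Gam pickleK /=.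
rewrite (@qf_eval_ext _ S _ a) ?Ha // => v Hv.
by rewrite nth_mkseq.
Qed.

Lemma Erange_sat S S' : E_range (Gam S) (Gam S') ->
  forall p, (exists a, qf_eval S a p) -> exists a, qf_eval S' a p.
Proof.
move=> H p Hs.
have : exists k, Gam S k = (pickle p).+1 by apply/Gam_range; right; exists p.
move/H/Gam_range => [//|[q [Hq Hs']]].
by move: Hq => [/(pcan_inj (@pickleK _)) ->].
Qed.

Lemma sat_Erange S S' :
  (forall p, (exists a, qf_eval S a p) <-> exists a, qf_eval S' a p) ->
  E_range (Gam S) (Gam S').
Proof.
move=> H x; split => /Gam_range [->|[p [-> Hp]]]; apply/Gam_range.
- by left.
- by right; exists p; split => //; apply/H.
- by left.
- by right; exists p; split => //; apply/H.
Qed.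

Lemma le_nth_max (l : seq nat) v : nth 0 l v <= foldr maxn 0 l.
Proof.
elim: l v => [|x l IH] [|v] //=; first by rewrite leq_max leqnn.
by rewrite leq_max IH orbT.
Qed.

Lemma agree_mono m m' S S' : m' <= m -> agree m S S' -> agree m' S S'.
Proof.
move=> le H i t Ht; apply: H; apply/allP => x /(allP Ht) /leq_trans; exact.
Qed.

Lemma Gam_cont k : exists b, forall S S', agree b S S' -> Gam S' k = Gam S k.
Proof.
rewrite /Gam; case: unpickle => [[p l]|]; last by exists 0.
exists (foldr maxn 0 l).+1 => S S' H /=.
by rewrite (qf_eval_agree (S' := S') _ _ H) // => v; rewrite ltnS le_nth_max.
Qed.

Lemma Gam_cont_n n : exists m, forall S S', agree m S S' -> forall k, k < n -> Gam S' k = Gam S k.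
Proof.
elim: n => [|n [m IH]]; first by exists 0.
have [b Hb] := Gam_cont n.
exists (maxn m b) => S S' H k; rewrite ltnS leq_eqVlt => /orP [/eqP ->|Hk].
  by apply: Hb; apply: agree_mono H; rewrite leq_maxr.
by apply: IH => //; apply: agree_mono H; rewrite leq_maxl.
Qed.

Lemma sat_iff_iso A B p : isomorphic A B ->
  (exists a, qf_eval A a p) <-> exists a, qf_eval B a p.
Proof. by move=> H; split; apply: iso_sat => //; apply: iso_sym. Qed.

End Sec2.

Lemma backward L (K : nat -> structure L) :
  sigma1_partial_order K -> E_range_learnable K.
Proof.
move=> HK; exists (@Gam L); split.
  move=> S _ n; have [m Hm] := Gam_cont_n L n.
  by exists m => S' _ H; apply: Hm.
move=> S S' [i Hi] [j Hj]; split.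
  move=> H; apply: sat_Erange => p; apply: sat_iff_iso H.
move=> H.
have Hij : i = j.
  case: (eqVneq i j) => // /eqP nij; exfalso; apply: (HK i j nij).
  apply: functional_extensionality => phi; apply: propositional_extensionality.
  rewrite /Th_sigma1 /sat_sigma1.
  have E : forall p, (exists a, qf_eval (K i) a p) <-> exists a, qf_eval (K j) a p.
    move=> p; rewrite -(sat_iff_iso p Hi) -(sat_iff_iso p Hj).
    split; apply: Erange_sat => // x; split; move/(H x) => //.
  split=> [[k Hk]|[k Hk]]; exists k; apply/E => //.
subst j; apply: iso_trans Hi (iso_sym Hj).
Qed.
From mathcomp Require Import zify.

Lemma ext_bij m (b : nat -> nat) :
  (forall x y, x < m -> y < m -> b x = b y -> x = y) ->
  exists pi : nat -> nat, bijective pi /\ forall x, x < m -> pi x = b x.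
Proof.
move=> binj.
set s1 := map b (iota 0 m).
set M := foldr maxn 0 s1.
set N := m + M.+1.
set s := s1 ++ [seq y <- iota 0 N | y \notin s1].
have s1N : forall y, y \in s1 -> y < N.
  move=> y /le_foldr_max; rewrite -/M => H; rewrite /N; lia.
have Us : uniq s.
  rewrite cat_uniq filter_uniq ?iota_uniq // andbT.
  apply/andP; split.
    rewrite map_inj_in_uniq ?iota_uniq // => x y; rewrite !mem_iota => /andP[_ hx] /andP[_ hy].
    exact: binj.
  by apply/hasPn => y; rewrite mem_filter => /andP[].
have Ms : s =i iota 0 N.
  move=> y; rewrite mem_cat mem_filter.
  by case E: (y \in s1) => //=; rewrite mem_iota /= s1N.
have Ss : size s = N by rewrite (perm_size (uniq_perm Us (iota_uniq 0 N) Ms)) size_iota.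
have inN : forall y, y \in s -> y < N by move=> y; rewrite Ms mem_iota.
exists (fun x => if x < N then nth 0 s x else x); split.
  exists (fun y => if y < N then index y s else y) => x /=.
    case: (ltnP x N) => hx /=.
      have hm : nth 0 s x \in s by apply: mem_nth; rewrite Ss.
      by rewrite inN // index_uniq // Ss.
    by rewrite ltnNge hx.
  case: (ltnP x N) => hx /=.
    have hm : x \in s by rewrite Ms mem_iota.
    by rewrite -Ss index_mem hm nth_index.
  by rewrite ltnNge hx.
move=> x hx; have -> : x < N by rewrite /N; lia.
rewrite nth_cat size_map size_iota hx (nth_map 0) ?size_iota // nth_iota //.
Qed.

Section Sec3.
Variable L : signature.
Implicit Types A B S : structure L.

Fixpoint allseqs (n m : nat) : seq (seq nat) :=
  if n is n'.+1 then [seq x :: s | x <- iota 0 m, s <- allseqs n' m] else [:: [::]].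

Lemma allseqsP m s : all (fun x => x < m) s -> s \in allseqs (size s) m.
Proof.
elim: s => [|x s IH] //= /andP [hx hs].
by apply: (allpairs_f (fun x s => x :: s)); rewrite ?mem_iota ?IH.
Qed.

Definition atoms m : seq qf :=
  [seq QEq x y | x <- iota 0 m, y <- iota 0 m] ++
  [seq QRel r s | r <- iota 0 (size L), s <- allseqs (nth 0 L r) m].

Definition lit A p := if qf_eval A id p then p else QNot p.

Definition delta A m := foldr QAnd QTrue (map (lit A) (atoms m)).

Lemma eval_foldr S a l : qf_eval S a (foldr QAnd QTrue l) = all (qf_eval S a) l.
Proof. by elim: l => //= p l ->. Qed.

Lemma delta_self A m : qf_eval A id (delta A m).
Proof.
rewrite /delta eval_foldr all_map; apply/allP => p _ /=.
by rewrite /lit; case E: (qf_eval A id p) => //=; rewrite E.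
Qed.

Lemma delta_sat A B m b : qf_eval B b (delta A m) ->
  forall p, p \in atoms m -> qf_eval B b p = qf_eval A id p.
Proof.
rewrite /delta eval_foldr all_map => /allP H p hp.
move: (H p hp); rewrite /= /lit.
by case: (qf_eval A id p) => //= /negbTE.
Qed.

Lemma copy_lemma A B m :
  (forall p, (exists a, qf_eval A a p) -> exists a, qf_eval B a p) ->
  exists B', isomorphic B' B /\ agree m A B'.
Proof.
move=> H.
have [b Hb] := H _ (ex_intro _ id (delta_self A m)).
have Hd := delta_sat Hb.
have binj : forall x y, x < m -> y < m -> b x = b y -> x = y.
  move=> x y hx hy e.
  have := Hd (QEq x y); rewrite /= e eqxx => h.
  apply/eqP; rewrite -h //.
  by rewrite mem_cat (allpairs_f QEq) ?mem_iota.
have [pi [bpi Hpi]] := ext_bij binj.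
exists (Structure (fun r t => rel B r (map_tuple pi t))); split.
  by exists pi; split.
move=> r t ht /=.
have := Hd (QRel r t); rewrite !qrelE => h.
have -> : map_tuple pi t = map_tuple b t.
  apply: val_inj => /=; apply/eq_in_map => x hx; apply: Hpi.
  exact: (allP ht).
rewrite h; last first.
  rewrite mem_cat; apply/orP; right.
  apply: (@allpairs_f_dep _ _ _ (fun r s => QRel r s)); first by rewrite mem_iota /=.
  by have := allseqsP ht; rewrite size_tuple.
by congr (rel A r); apply: val_inj; rewrite /= map_id.
Qed.

End Sec3.

Lemma forward L (K : nat -> structure L)
  (Hfam : forall i j, i <> j -> ~ isomorphic (K i) (K j)) :
  E_range_learnable K -> sigma1_partial_order K.
Proof.
move=> [G [Gc Gl]] i j nij heq.
have Hsat : forall i j, Th_sigma1 (K i) = Th_sigma1 (K j) ->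
    forall p, (exists a, qf_eval (K i) a p) -> exists a, qf_eval (K j) a p.
  move=> i' j' e p [a Ha].
  have : Th_sigma1 (K i') (fun _ => p) by exists 0, a.
  by rewrite e => [[k [a' Ha']]]; exists a'.
have half : forall i j, Th_sigma1 (K i) = Th_sigma1 (K j) ->
    forall k, exists k', G (K j) k' = G (K i) k.
  move=> i' j' e k.
  have [m Hm] := Gc (K i') (ex_intro _ i' (iso_refl _)) k.+1.
  have [B' [HB' HA]] := copy_lemma m (Hsat i' j' e).
  have LB' : LD K B' by exists j'.
  have := Hm B' LB' HA k (ltnSn k) => <-.
  have := (Gl B' (K j') LB' (ex_intro _ j' (iso_refl _))).1 HB' (G B' k).
  by move=> [h _]; apply: h; exists k.
apply: (Hfam i j nij); apply/(Gl _ _ (ex_intro _ i (iso_refl _)) (ex_intro _ j (iso_refl _))).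
move=> x; split => [[k <-]|[k <-]].
  exact: half.
exact: (half j i (esym heq)).
Qed.

Theorem mainTheorem6 (L : signature) (K : nat -> structure L)
  (Hfam : forall i j, i <> j -> ~ isomorphic (K i) (K j)) :
  E_range_learnable K <-> sigma1_partial_order K.
Proof. split; [exact: forward | exact: backward]. Qed.
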